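(* Let $X\subseteq\mathbb{N}$ be finite, $\omega^{n+1}$-large and exp-sparse, and let $c\in\mathbb{N}$ with $4^c\le\min X$. Then: (1) for any finite $W\subseteq\mathbb{N}$ with $|W|\le c$ and $\max W<\min X$, and any colouring $P:[W\cup X]^2\to2$, there exists an $\omega^n$-large $Y\subseteq X$ such that $P(w,y)=P(w,y')$ for all $w\in W$ and $y,y'\in Y$; (2) for any finite $W\subseteq\mathbb{N}$ with $|W|\le c$ and $\max X<\min W$, and any colouring $P:[X\cup W]^2\to2$, there exists an $\omega^n$-large $Y\subseteq X$ such that $P(y,w)=P(y',w)$ for all $w\in W$ and $y,y'\in Y$.
   Context: Ordinals below $\omega^\omega$ are in Cantor normal form; $\omega^j\cdot m$ = sum of $m$ copies of $\omega^j$. For $m\in\mathbb{N}$: $0[m]=0$, $(\beta+1)[m]=\beta$, $(\beta+\omega^{n})[m]=\beta+\omega^{n-1}\cdot m$ for $n\ge1$. A finite $X=\{x_0<\dots<x_{\ell-1}\}\subseteq\mathbb{N}$ is $\alpha$-large if $\alpha[x_0]\cdots[x_{\ell-1}]=0$. A set $X$ with $\min X\ge3$ is exp-sparse if $x<y$ in $X$ implies $4^x<y$. Pairs in $[Z]^2$ are written $(x,y)$ with $x<y$. *)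

(* Defs.v *)
From mathcomp Require Import all_boot.
Set Implicit Arguments. Unset Strict Implicit. Unset Printing Implicit Defensive.

(* Ordinals below omega^omega in Cantor normal form:
   the list [:: e1; ...; ek] (e1 >= ... >= ek) denotes omega^e1 + ... + omega^ek;
   [::] denotes 0 and omega^0 = 1. *)
Definition ord := seq nat.

Definition omega_pow (n : nat) : ord := [:: n].

(* Fundamental sequence a[m]:
   0[m] = 0, (b+1)[m] = b, (b + omega^(n+1))[m] = b + omega^n * m. *)
Definition fs (a : ord) (m : nat) : ord :=
  if a is [::] then [::] else
  let b := take (size a).-1 a in
  match last 0 a with
  | 0 => b
  | n.+1 => b ++ nseq m n
  end.

(* A finite set X, given as its increasing enumeration x0 < ... < x_(l-1),
   is a-large iff a[x0]...[x_(l-1)] = 0. *)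
Definition large (a : ord) (X : seq nat) : bool := foldl fs a X == [::].

(* finite subsets of N are represented by strictly increasing sequences *)
Definition fin_set (X : seq nat) : bool := sorted ltn X.

Definition exp_sparse (X : seq nat) : Prop :=
  (forall x, x \in X -> 3 <= x) /\
  (forall x y, x \in X -> y \in X -> x < y -> 4 ^ x < y).

(* Main.v *)
Require Import Defs.
From mathcomp Require Import all_boot zify.
Set Implicit Arguments. Unset Strict Implicit. Unset Printing Implicit Defensive.
Definition fsterm (l z e : nat) := if l is l'.+1 then (l' == e) * z else 0.

Definition cnt (a : seq nat) e := count_mem e a.

Lemma fs_rcons b l z : fs (rcons b l) z = b ++ (if l is l'.+1 then nseq z l' else [::]).
Proof.
rewrite /fs; case: b => [|x b] /=; first by case: l.
rewrite size_rcons last_rcons /= -cats1 take_size_cat //.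
by case: l => [|l]; rewrite ?cats0.
Qed.

Lemma cnt_rcons b l e : cnt (rcons b l) e = cnt b e + (l == e).
Proof. by rewrite /cnt -cats1 count_cat /= addn0. Qed.

Lemma cnt_fs b l z e : cnt (fs (rcons b l) z) e = cnt b e + fsterm l z e.
Proof.
rewrite fs_rcons /cnt count_cat; case: l => [|l] //=.
by rewrite count_nseq.
Qed.

Lemma pw_rcons_min b l : pairwise geq (rcons b l) -> forall e, e < l -> cnt b e = 0.
Proof.
rewrite pairwise_rcons => /andP [/allP Ha _] e He.
apply/count_memPn; apply/negP => /Ha /=; lia.
Qed.

Lemma pw_fs b l z : pairwise geq (rcons b l) -> pairwise geq (fs (rcons b l) z).
Proof.
rewrite fs_rcons pairwise_rcons => /andP [/allP Ha Hb].
case: l Ha => [|l] Ha; first by rewrite cats0.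
rewrite pairwise_cat Hb /=; apply/andP; split.
  apply/allrelP => x y /Ha /= Hx /nseqP [-> _]; lia.
elim: z => [|z IH] //=; rewrite IH andbT; apply/allP => y /nseqP [-> _] /=; lia.
Qed.

Lemma size_fs a z : size (fs a z) <= size a + z.
Proof.
case/lastP: a => [|b l] //; rewrite fs_rcons size_cat size_rcons.
case: l => [|l]; rewrite ?size_nseq /=; lia.
Qed.

Lemma foldl_fs_nil s : foldl fs [::] s = [::].
Proof. by elim: s. Qed.
Definition olt (f g : nat -> nat) :=
  exists e, f e < g e /\ forall e', e < e' -> f e' = g e'.
Definition ole f g := (forall e, f e = g e) \/ olt f g.

Lemma ole_ext f g f' g' : f =1 f' -> g =1 g' -> ole f g -> ole f' g'.
Proof.
move=> Hf Hg [H|[e [H1 H2]]]; [left => e; by rewrite -Hf -Hg|right; exists e].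
split; first by rewrite -Hf -Hg.
by move=> e' He'; rewrite -Hf -Hg H2.
Qed.

Lemma olt_ole_trans f g h : olt f g -> ole g h -> olt f h.
Proof.
move=> [e1 [H1 H1']] [H|[e2 [H2 H2']]].
  exists e1; split; first by rewrite -H.
  by move=> e' He; rewrite -H H1'.
case: (ltngtP e1 e2) => He.
- exists e2; split; first by rewrite H1' //.
  by move=> e' He'; rewrite H1' ?H2' //; apply: ltn_trans He'.
- exists e1; split; first by rewrite -H2'.
  by move=> e' He'; rewrite H1' ?H2' //; apply: ltn_trans He'.
- subst; exists e2; split; first by apply: ltn_trans H2.
  by move=> e' He'; rewrite H1' ?H2'.
Qed.

Lemma fst0 l z e : (l == 0) || (l.-1 != e) -> fsterm l z e = 0.
Proof. by case: l => [|l] //= /negbTE ->. Qed.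
Lemma fst1 l z : 0 < l -> fsterm l z l.-1 = z.
Proof. by case: l => [|l] //= _; rewrite eqxx mul1n. Qed.

Lemma keyA (B D : nat -> nat) l z :
  (forall e, e < l -> B e = 0) -> (forall e, D e < z) ->
  olt D (fun e => B e + (l == e)) ->
  ole D (fun e => B e + fsterm l z e).
Proof.
move=> HB HD [e0 [H0 H0']].
case: (ltngtP l e0) => Hl.
- right; exists e0; split.
    by move: H0; rewrite fst0; [lia|lia].
  by move=> e' He'; have := H0' e' He'; rewrite fst0; [lia|lia].
- by move: H0; rewrite HB //; lia.
- subst e0; have [Heq|Hlt] : D l = B l \/ D l < B l by move: H0; rewrite eqxx; lia.
  + case: (posnP l) => Hl0.
    * left => e; rewrite fst0; last by lia.
      case: (posnP e) => He; first by subst; rewrite Heq addn0.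
      by have := H0' e; lia.
    * right; exists l.-1; split.
        by rewrite fst1 // HB ?add0n; [apply: HD|lia].
      move=> e' He'; rewrite fst0; last by lia.
      case: (ltngtP e' l) => H; first by lia.
        by have := H0' e' H; lia.
      by subst; lia.
  + right; exists l; split.
      by rewrite fst0 ?addn0 //; lia.
    by move=> e' He'; have := H0' e' He'; rewrite fst0; [lia|lia].
Qed.

Lemma key (B E : nat -> nat) (l l2 z : nat) :
  (forall e, e < l -> B e = 0) ->
  (forall e, E e + (l2 == e) < z) ->
  ole (fun e => E e + (l2 == e)) (fun e => B e + (l == e)) ->
  ole (fun e => E e + fsterm l2 z e) (fun e => B e + fsterm l z e).
Proof.
move=> HB Hz Hle.
have Hlt : olt (fun e => E e + fsterm l2 z e) (fun e => E e + (l2 == e)).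
  exists l2; split.
    by rewrite eqxx fst0; [lia|lia].
  by move=> e' He'; rewrite fst0; [lia|lia].
case: Hle => [Heq|Hs]; last first.
  right; apply: olt_ole_trans Hlt _; apply: (keyA HB _ Hs) => e.
  by have := Hz e; lia.
have Hl : l <= l2.
  case: (leqP l l2) => // H; have := Heq l2; rewrite HB //; lia.
case: (ltngtP l l2) Hl => // Hl _.
- right; exists l2; split.
    by have := Heq l2; rewrite (@fst0 l2) ?(@fst0 l); lia.
  move=> e' He'; have := Heq e'.
  by rewrite (@fst0 l2) ?(@fst0 l); lia.
- subst l2; left => e; have := Heq e; lia.
Qed.

Lemma sum_split (T : finType) (F : T -> nat) t : \sum_(t' : T) F t' = F t + \sum_(t' | t' != t) F t'.
Proof. by rewrite (bigD1 t). Qed.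

Lemma main_inv (T : finType) (col : nat -> T) (t0 : T) :
  forall s (g : seq nat) (r : T -> seq nat),
  pairwise (fun x y => 4 ^ x < y) s ->
  pairwise geq g -> (forall t, pairwise geq (r t)) ->
  (forall t, foldl fs (r t) [seq y <- s | col y == t] != [::]) ->
  (forall x, x \in s -> \sum_(t : T) size (r t) < x) ->
  ole (fun e => \sum_(t : T) cnt (r t) e) (cnt g) ->
  foldl fs g s != [::].
Proof.
have nz : forall (r : T -> seq nat) g, (forall t, r t != [::]) ->
    ole (fun e => \sum_t cnt (r t) e) (cnt g) -> g != [::].
  move=> r g Hr Hole; apply/eqP => Hg; subst g.
  case Er: (r t0) (Hr t0) => [|x s] // _.
  have Hx : 0 < \sum_t cnt (r t) x.
    rewrite (sum_split _ t0) Er /cnt /= eqxx; lia.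
  case: Hole => [H|[e [He _]]]; last by rewrite /cnt in He.
  by move: (H x) Hx => ->.
elim=> [|z s IH] g r Hpw Hg Hr Hnl Hsz Hole.
  have Hr' : forall t, r t != [::] by move=> t; exact: Hnl t.
  exact: nz Hr' Hole.
have Hr' : forall t, r t != [::].
  by move=> t; apply/negP => /eqP E; move: (Hnl t); rewrite E foldl_fs_nil.
have Hg0 := nz r g Hr' Hole.
rewrite /=.
case/lastP: g Hg Hole Hg0 => [|b l] // Hg Hole _.
case/lastP E2: (r (col z)) (Hr' (col z)) => [|b2 l2] // _.
move: Hpw; rewrite pairwise_cons => /andP [/allP Hz Hpw].
have Hsum : forall (F : seq nat -> nat),
  \sum_(t : T) F (if t == col z then fs (r t) z else r t) =
  F (fs (rcons b2 l2) z) + \sum_(t | t != col z) F (r t).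
  move=> F; rewrite (sum_split _ (col z)) eqxx E2; congr (_ + _).
  by apply: eq_bigr => t /negbTE ->.
apply: (IH _ (fun t => if t == col z then fs (r t) z else r t)) => //.
- exact: pw_fs.
- move=> t; case: eqP => [->|_] //; rewrite E2; apply: pw_fs; rewrite -E2; exact: Hr.
- move=> t; move: (Hnl t) => /=; case: (eqVneq t (col z)) => [->|Hne].
    by rewrite eqxx || done.
  have Hne2 : (col z == t) = false by rewrite eq_sym (negbTE Hne).
  by [].
- move=> x Hx; have Hzx := Hz x Hx; rewrite Hsum.
  have Hs := Hsz z (mem_head _ _); rewrite (sum_split _ (col z)) E2 in Hs.
  have Hfs := size_fs (rcons b2 l2) z.
  have H2 : z < 2 ^ z := ltn_expl z (isT : 1 < 2).
  have H4 : 4 ^ z = 2 ^ z * 2 ^ z by rewrite -expnMn.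
  rewrite H4 in Hzx; nia.
- apply: (@ole_ext (fun e => (\sum_(t | t != col z) cnt (r t) e + cnt b2 e) + fsterm l2 z e)
     (fun e => cnt b e + fsterm l z e)).
  + by move=> e; rewrite (Hsum (cnt^~ e)) cnt_fs; lia.
  + by move=> e; rewrite cnt_fs.
  apply: key.
  + exact: pw_rcons_min.
  + move=> e; have Hs := Hsz z (mem_head _ _).
    have : \sum_(t : T) cnt (r t) e <= \sum_(t : T) size (r t).
      by apply: leq_sum => t _; exact: count_size.
    rewrite (sum_split _ (col z)) E2 cnt_rcons; lia.
  apply: ole_ext Hole.
  + by move=> e; rewrite (sum_split _ (col z)) E2 cnt_rcons; lia.
  + by move=> e; rewrite cnt_rcons.
Qed.

Lemma pairwise_in (r r' : rel nat) s :
  (forall x y, x \in s -> y \in s -> r x y -> r' x y) -> pairwise r s -> pairwise r' s.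
Proof.
elim: s => [|x s IH] // H; rewrite !pairwise_cons => /andP [/allP Ha Hp].
apply/andP; split.
  apply/allP => y Hy; apply: H; rewrite ?mem_head ?in_cons ?Hy ?orbT //; exact: Ha.
apply: IH Hp => a b Ha1 Hb1; apply: H; rewrite in_cons ?Ha1 ?Hb1 orbT //.
Qed.

Lemma pigeon (T : finType) (col : nat -> T) n X :
  fin_set X -> large (omega_pow n.+1) X -> exp_sparse X ->
  (forall x, x \in X -> #|T| < x) ->
  exists t, large (omega_pow n) [seq y <- X | col y == t].
Proof.
move=> Hfs Hl [H3 Hsp] HT.
have [t0 _] : exists t : T, true by case: X Hl {Hfs H3 Hsp HT} => [|x _] // _; exists (col x).
case: (boolP [exists t, large (omega_pow n) [seq y <- X | col y == t]]) =>
  [/existsP [t Ht]|/existsPn H]; first by exists t.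
exfalso; move: Hl; rewrite /large => /eqP HX.
have Hpw : pairwise ltn X by rewrite -sorted_pairwise //; exact: ltn_trans.
have Hm := @main_inv T col t0 X (omega_pow n.+1) (fun _ => omega_pow n).
have : foldl fs (omega_pow n.+1) X != [::]; last by rewrite HX.
apply: Hm => //.
- by apply: (@pairwise_in ltn) Hpw => x y Hx Hy Hxy; exact: Hsp.
- by move=> x Hx; rewrite /= sum1_card; exact: HT.
- right; exists n.+1; split.
    by rewrite /cnt /= eqxx big1 // => t _ /=; lia.
  by move=> e He; rewrite /cnt /= big1 => [|t _ /=]; lia.
Qed.

Theorem lemma2p5 (n : nat) (X : seq nat) (c : nat) :
  fin_set X -> large (omega_pow n.+1) X -> exp_sparse X ->
  (forall x, x \in X -> 4 ^ c <= x) ->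
  (forall (W : seq nat) (P : nat -> nat -> bool),
      uniq W -> size W <= c ->
      (forall w x, w \in W -> x \in X -> w < x) ->
      exists Y : seq nat,
        [/\ fin_set Y, {subset Y <= X}, large (omega_pow n) Y &
            forall w y y', w \in W -> y \in Y -> y' \in Y -> P w y = P w y'])
  /\
  (forall (W : seq nat) (P : nat -> nat -> bool),
      uniq W -> size W <= c ->
      (forall x w, x \in X -> w \in W -> x < w) ->
      exists Y : seq nat,
        [/\ fin_set Y, {subset Y <= X}, large (omega_pow n) Y &
            forall w y y', w \in W -> y \in Y -> y' \in Y -> P y w = P y' w]).
Proof.
move=> Hfs Hl Hsp Hc.
have HT : forall m, m <= c -> forall x, x \in X -> #|{: m.-tuple bool}| < x.
  move=> m Hm x Hx; rewrite card_tuple card_bool.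
  have H1 := Hc x Hx; have H3 := Hsp.1 x Hx.
  have H2 : 2 ^ m <= 2 ^ c by rewrite leq_exp2l.
  have H4 : 4 ^ c = 2 ^ c * 2 ^ c by rewrite -expnMn.
  have H5 : 0 < 2 ^ c by rewrite expn_gt0.
  rewrite H4 in H1; nia.
have Hfin : forall (T : eqType) (col : nat -> T) t, fin_set [seq y <- X | col y == t].
  by move=> T col t; apply: sorted_filter => //; exact: ltn_trans.
split => W P _ HW _.
- pose col y := [tuple P (nth 0 W i) y | i < size W].
  have [t Ht] := pigeon col Hfs Hl Hsp (HT _ HW).
  exists [seq y <- X | col y == t]; split => //.
  + by move=> y; rewrite mem_filter => /andP [].
  + move=> w y y' Hw; rewrite !mem_filter => /andP [/eqP Hy _] /andP [/eqP Hy' _].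
    have Hi : index w W < size W by rewrite index_mem.
    have := congr1 (fun u => tnth u (Ordinal Hi)) (etrans Hy (esym Hy')).
    by rewrite /= !tnth_mktuple nth_index.
- pose col y := [tuple P y (nth 0 W i) | i < size W].
  have [t Ht] := pigeon col Hfs Hl Hsp (HT _ HW).
  exists [seq y <- X | col y == t]; split => //.
  + by move=> y; rewrite mem_filter => /andP [].
  + move=> w y y' Hw; rewrite !mem_filter => /andP [/eqP Hy _] /andP [/eqP Hy' _].
    have Hi : index w W < size W by rewrite index_mem.
    have := congr1 (fun u => tnth u (Ordinal Hi)) (etrans Hy (esym Hy')).
    by rewrite /= !tnth_mktuple nth_index.
Qed.
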